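(* Let $\Theta=\{1,2\}$, let $(A,u)$ be a decision problem with $|A|=2$, and let $P_1,\dots,P_m$ be experiments with Blackwell supremum $\overline P$. Then $$V(P_1,\dots,P_m;(A,u))=V(\overline P;(A,u))=\max_{j=1,\dots,m}V(P_j;(A,u)).$$
   Context: $\Theta$ is a finite set of states. A decision problem is a pair $(A,u)$ with $A$ a finite nonempty action set and $u:\Theta\times A\to\mathbb{R}$; for $\alpha\in\Delta(A)$ write $u(\theta,\alpha)=\sum_a\alpha(a)u(\theta,a)$. An experiment is a map $P:\Theta\to\Delta(Y)$ with $Y$ a finite signal set. Given experiments $P_j:\Theta\to\Delta(Y_j)$, $j=1,\dots,m$, let $\mathbf Y=Y_1\times\cdots\times Y_m$ and let $\mathcal P(P_1,\dots,P_m)$ be the set of experiments $P:\Theta\to\Delta(\mathbf Y)$ whose $j$-th marginal is $P_j(\cdot|\theta)$ for every $\theta$ and $j$. A strategy is a map $\sigma:\mathbf Y\to\Delta(A)$. Define $V(P_1,\dots,P_m;(A,u))=\max_{\sigma}\min_{P\in\mathcal P(P_1,\dots,P_m)}\sum_{\theta}\sum_{\mathbf y\in\mathbf Y}P(\mathbf y|\theta)u(\theta,\sigma(\mathbf y))$; for $m=1$ this is the usual value $V(P;(A,u))=\max_{\sigma:Y\to\Delta(A)}\sum_\theta\sum_y P(y|\theta)u(\theta,\sigma(y))$. An experiment $P$ is more informative than $Q$ if $V(P;(A,u))\ge V(Q;(A,u))$ for every decision problem. $R$ is a Blackwell supremum of $P_1,\dots,P_m$ if $R$ is more informative than each $P_j$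 and every $S$ more informative than all $P_j$ is more informative than $R$ (such a supremum exists when $|\Theta|=2$). *)

(* Defs.v *)
From HB Require Import structures.
From mathcomp Require Import all_boot all_order all_algebra.
From mathcomp Require Import classical_sets boolp reals.
Set Implicit Arguments. Unset Strict Implicit. Unset Printing Implicit Defensive.
Import Order.TTheory GRing.Theory Num.Theory.
Local Open Scope ring_scope.
Local Open Scope classical_set_scope.

Section Blackwell.
Variable R : realType.

Definition is_dist (T : finType) (p : T -> R) : Prop :=
  (forall t, 0 <= p t) /\ \sum_(t : T) p t = 1.

(** An experiment [P : Theta -> Delta(Y)], written as [P theta y = P(y|theta)]. *)
Definition experiment (Theta Y : finType) (P : Theta -> Y -> R) : Prop :=
  forall th, is_dist (P th).

Definition strategy (Y A : finType) (sigma : Y -> A -> R) : Prop :=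
  forall y, is_dist (sigma y).

Definition mixed_u (Theta A : finType) (u : Theta -> A -> R) (th : Theta)
  (alpha : A -> R) : R := \sum_(a : A) alpha a * u th a.

Definition payoff (Theta Y A : finType) (P : Theta -> Y -> R)
  (u : Theta -> A -> R) (sigma : Y -> A -> R) : R :=
  \sum_(th : Theta) \sum_(y : Y) P th y * mixed_u u th (sigma y).

(** Single-experiment value V(P;(A,u)) = max over strategies (written as sup;
    the max is attained). *)
Definition value (Theta Y A : finType) (P : Theta -> Y -> R)
  (u : Theta -> A -> R) : R :=
  sup [set v | exists sigma : Y -> A -> R, strategy sigma /\ v = payoff P u sigma].

Definition prodY (m : nat) (Y : 'I_m -> finType) : finType :=
  {dffun forall j : 'I_m, Y j}.

Definition coupling (Theta : finType) (m : nat) (Y : 'I_m -> finType)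
  (P : forall j : 'I_m, Theta -> Y j -> R) (Q : Theta -> prodY Y -> R) : Prop :=
  experiment Q /\
  forall th (j : 'I_m) (y : Y j),
    \sum_(yy : prodY Y | yy j == y) Q th yy = P j th y.

Definition value_multi (Theta A : finType) (m : nat) (Y : 'I_m -> finType)
  (P : forall j : 'I_m, Theta -> Y j -> R) (u : Theta -> A -> R) : R :=
  sup [set v | exists sigma : prodY Y -> A -> R, strategy sigma /\
        v = inf [set w | exists Q : Theta -> prodY Y -> R,
                   coupling P Q /\ w = payoff Q u sigma]].

Definition more_informative (Theta Y1 Y2 : finType) (P : Theta -> Y1 -> R)
  (Q : Theta -> Y2 -> R) : Prop :=
  forall (A : finType) (u : Theta -> A -> R), (0 < #|A|)%N ->
    value Q u <= value P u.

Definition blackwell_sup (Theta Z : finType) (Rb : Theta -> Z -> R) (m : nat)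
  (Y : 'I_m -> finType) (P : forall j : 'I_m, Theta -> Y j -> R) : Prop :=
  (forall j, more_informative Rb (P j)) /\
  forall (W : finType) (S : Theta -> W -> R), experiment S ->
    (forall j, more_informative S (P j)) -> more_informative S Rb.

End Blackwell.

(* Main.v *)
Require Import Defs.
From HB Require Import structures.
From mathcomp Require Import all_boot all_order all_algebra.
From mathcomp Require Import classical_sets boolp reals.
From mathcomp Require Import ring lra.
Import Order.TTheory GRing.Theory Num.Theory.
Local Open Scope ring_scope.
Local Open Scope classical_set_scope.

Set Implicit Arguments. Unset Strict Implicit.


Section Prod.
Variable R : realType.
Variables (m : nat) (Y : 'I_m -> finType).

Lemma dprod_distr (h : forall k : 'I_m, Y k -> R) :
  \sum_(f : prodY Y) \prod_k h k (f k) = \prod_k \sum_(s : Y k) h k s.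
Proof.
rewrite (reindex (@dffun_of_fprod _ Y)); last exact/onW_bij/dffun_of_fprod_bij.
transitivity (\sum_(t : fprod Y) \prod_(k in 'I_m) [ffun s => h k s] (t k)).
  by apply: eq_bigr => t _; apply: eq_bigr => k _; rewrite !ffunE.
rewrite big_fprod /=.
rewrite -(bigA_distr_big_dep (fun i => tagged_with (fun x : 'I_m => Y x) i) (fun i j => untag 0 [ffun s => h i s] j)).
apply: eq_bigr => k _.
rewrite (big_tag h k); apply: eq_bigr => x _.
rewrite /untag; case: eqP => // e; by rewrite ffunE.
Qed.

Lemma dprod_marg (h : forall k : 'I_m, Y k -> R) (j : 'I_m) (t : Y j) :
  \sum_(f : prodY Y | f j == t) \prod_k h k (f k) =
  h j t * \prod_(k | k != j) \sum_(s : Y k) h k s.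
Proof.
pose h' := @dfwith _ (fun k => Y k -> R) h j (fun s => h j s * (s == t)%:R).
transitivity (\sum_(f : prodY Y) \prod_k h' k (f k)).
  rewrite big_mkcond; apply: eq_bigr => f _.
  rewrite (bigD1 j) //= [RHS](bigD1 j) //= /h' dfwith_in.
  rewrite [X in _ = _ * X](eq_bigr (fun k => h k (f k))); last first.
    by move=> k kj; rewrite dfwith_out // eq_sym.
  by case: eqP => _; rewrite ?mulr1 ?mulr0 ?mul0r.
rewrite dprod_distr (bigD1 j) //= /h' dfwith_in.
rewrite (bigD1 t) //= eqxx mulr1 big1 ?addr0; last first.
  by move=> s /negbTE ->; rewrite mulr0.
congr (_ * _); apply: eq_bigr => k kj; by rewrite dfwith_out // eq_sym.
Qed.
End Prod.

Set Implicit Arguments. Unset Strict Implicit.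



Section Gen.
Variable R : realType.

Lemma sup_max (E : set R) x : E x -> ubound E x -> sup E = x.
Proof.
move=> Ex ub; apply/le_anti/andP; split; first by apply: ge_sup => //; exists x.
by apply: ub_le_sup => //; exists x.
Qed.

Lemma dist_le1 (T : finType) (p : T -> R) t : is_dist p -> p t <= 1.
Proof.
case=> p0 <-; rewrite (bigD1 t) //= lerDl; exact: sumr_ge0.
Qed.

Lemma payoff_bound (Th Y A : finType) (P : Th -> Y -> R) (u : Th -> A -> R) sigma :
  experiment P -> strategy sigma ->
  `|payoff P u sigma| <= \sum_th \sum_a `|u th a|.
Proof.
move=> hP hs; rewrite /payoff; apply: (le_trans (ler_norm_sum _ _ _)).
apply: ler_sum => th _.
have <- : \sum_y P th y * \sum_a `|u th a| = \sum_a `|u th a|.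
  by rewrite -mulr_suml (proj2 (hP th)) mul1r.
apply: (le_trans (ler_norm_sum _ _ _)); apply: ler_sum => y _.
rewrite normrM ger0_norm; last exact: (proj1 (hP th)).
apply: ler_wpM2l; first exact: (proj1 (hP th)).
rewrite /mixed_u; apply: (le_trans (ler_norm_sum _ _ _)); apply: ler_sum => a _.
rewrite normrM ger0_norm; last exact: (proj1 (hs y)).
by rewrite -[leRHS]mul1r ler_wpM2r // dist_le1.
Qed.
End Gen.

Set Implicit Arguments. Unset Strict Implicit.



Section Bin.
Variable R : realType.
Variables (A : finType) (u : 'I_2 -> A -> R) (a0 a1 : A).
Hypothesis a01 : a0 != a1.
Hypothesis aA : forall a, a = a0 \/ a = a1.

Lemma sumA (F : A -> R) : \sum_a F a = F a0 + F a1.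
Proof.
rewrite (bigD1 a0) //= (bigD1 a1) /=; last by rewrite eq_sym.
rewrite big_pred0 ?addr0 // => a; case: (aA a) => ->; rewrite ?eqxx ?andbF //.
Qed.

Definition dd th := u th a0 - u th a1.
Definition c0 := \sum_th u th a1.
Definition gg (Y : finType) (E : 'I_2 -> Y -> R) y := \sum_th dd th * E th y.
Definition WW (Y : finType) (E : 'I_2 -> Y -> R) := c0 + \sum_y Num.max 0 (gg E y).

Lemma payoffE (Y : finType) (E : 'I_2 -> Y -> R) sigma :
  experiment E -> strategy sigma ->
  payoff E u sigma = c0 + \sum_y sigma y a0 * gg E y.
Proof.
move=> hE hs; rewrite /payoff /c0 /gg.
have h1 th y : E th y * mixed_u u th (sigma y) =
    u th a1 * E th y + sigma y a0 * (dd th * E th y).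
  rewrite /mixed_u sumA /dd.
  have : sigma y a1 = 1 - sigma y a0.
    by have [_] := hs y; rewrite sumA => <-; rewrite addrAC subrr add0r.
  move=> ->; ring.
under eq_bigr do under eq_bigr do rewrite h1.
under eq_bigr do rewrite big_split /=.
rewrite big_split /=; congr (_ + _).
  by apply: eq_bigr => th _; rewrite -mulr_sumr (proj2 (hE th)) mulr1.
rewrite exchange_big /=; apply: eq_bigr => y _; by rewrite mulr_sumr.
Qed.

Definition sstar (Y : finType) (E : 'I_2 -> Y -> R) (y : Y) (a : A) : R :=
  if 0 < gg E y then (a == a0)%:R else (a == a1)%:R.

Lemma sstar_strategy (Y : finType) (E : 'I_2 -> Y -> R) : strategy (sstar E).
Proof.
move=> y; rewrite /sstar; split; first by move=> a; case: ifP => _; rewrite ler0n.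
by rewrite sumA; case: ifP => _; rewrite !eqxx ?(negbTE a01) 1?eq_sym ?(negbTE a01) ?addr0 ?add0r.
Qed.

Lemma sstar_payoff (Y : finType) (E : 'I_2 -> Y -> R) :
  experiment E -> payoff E u (sstar E) = WW E.
Proof.
move=> hE; rewrite payoffE //; last exact: sstar_strategy.
rewrite /WW; congr (_ + _); apply: eq_bigr => y _.
rewrite /sstar eqxx (negbTE a01).
by case: ltP => h; rewrite ?mul1r ?mul0r.
Qed.

Lemma valueE (Y : finType) (E : 'I_2 -> Y -> R) :
  experiment E -> value E u = WW E.
Proof.
move=> hE; rewrite /value; apply: sup_max; rewrite /=.
  exists (sstar E); split; first exact: sstar_strategy.
  by rewrite sstar_payoff.
move=> v [sigma [hs ->]]; rewrite payoffE // /WW lerD2l; apply: ler_sum => y _.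
have s0 := proj1 (hs y) a0; have s1 : sigma y a0 <= 1 by apply: dist_le1.
case: (leP 0 (gg E y)) => h.
  by rewrite -[leRHS]mul1r ler_wpM2r.
exact: mulr_ge0_le0 (ltW h).
Qed.
End Bin.

Set Implicit Arguments. Unset Strict Implicit.



Section Gen2.
Variable R : realType.

Lemma inf_min (E : set R) x : E x -> lbound E x -> inf E = x.
Proof.
move=> Ex lb; apply/le_anti/andP; split; last by apply: lb_le_inf => //; exists x.
by apply: ge_inf => //; exists x.
Qed.

Lemma value_ge (Th Y A : finType) (P : Th -> Y -> R) (u : Th -> A -> R) sigma :
  experiment P -> strategy sigma -> payoff P u sigma <= value P u.
Proof.
move=> hP hs; apply: ub_le_sup; last by exists sigma.
exists (\sum_th \sum_a `|u th a|) => v [s [hs' ->]].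
exact: le_trans (ler_norm _) (payoff_bound _ hP hs').
Qed.

Lemma exists_strategy (Y A : finType) : (0 < #|A|)%N ->
  exists sigma : Y -> A -> R, strategy sigma.
Proof.
case/card_gt0P => a _; exists (fun _ b => (b == a)%:R) => y; split.
  by move=> b; rewrite ler0n.
by rewrite (bigD1 a) //= eqxx big1 ?addr0 // => b /negbTE ->.
Qed.

Lemma value_le (Th Y A : finType) (P : Th -> Y -> R) (u : Th -> A -> R) B :
  (0 < #|A|)%N -> (forall sigma, strategy sigma -> payoff P u sigma <= B) ->
  value P u <= B.
Proof.
move=> hA hB; apply: ge_sup; last by move=> v [s [hs ->]]; exact: hB.
have [s hs] := @exists_strategy Y A hA; by exists (payoff P u s), s.
Qed.

Local Unset Implicit Arguments.
Variables (Th : finType) (m : nat) (Y : 'I_m -> finType).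
Variable (P : forall j : 'I_m, Th -> Y j -> R).

Lemma payoff_lift (Q : Th -> prodY Y -> R) (A : finType) (u : Th -> A -> R)
   (j : 'I_m) (sigma : Y j -> A -> R) :
  coupling P Q -> payoff Q u (fun yy : prodY Y => sigma (yy j)) = payoff (P j) u sigma.
Proof.
move=> [_ hm]; rewrite /payoff; apply: eq_bigr => th _.
rewrite (partition_big (fun yy : prodY Y => yy j) predT) //=.
apply: eq_bigr => t _; rewrite -hm mulr_suml; apply: eq_bigr => yy /eqP -> //.
Qed.

Lemma coupling_more (Q : Th -> prodY Y -> R) j :
  coupling P Q -> more_informative Q (P j).
Proof.
move=> hQ A u hA; apply: value_le => // s hs.
rewrite -(payoff_lift Q A u j s) //; apply: value_ge; first exact: hQ.1.
by move=> y; apply: hs.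
Qed.
End Gen2.

Set Implicit Arguments. Unset Strict Implicit.



Section Cons.
Variable R : realType.
Variables (m : nat) (Y : 'I_m -> finType).
Hypothesis m0 : (0 < m)%N.

Definition prodm (c : R) (f : forall k, Y k -> R) (yy : prodY Y) : R :=
  c * \prod_k (f k (yy k) / c).

Lemma prodm_marg c f : 0 <= c -> (forall k s, 0 <= f k s) ->
  (forall k, \sum_s f k s = c) ->
  forall j t, \sum_(yy : prodY Y | yy j == t) prodm c f yy = f j t.
Proof.
move=> c0 f0 fs j t; rewrite /prodm -big_distrr /= (dprod_marg (fun k s => f k s / c)).
have [ceq|cn0] := eqVneq c 0.
  rewrite ceq !mul0r; apply/esym.
  have := fs j; rewrite ceq => /eqP; rewrite psumr_eq0 //.
  by move/allP/(_ t (mem_index_enum _))/implyP/(_ isT)/eqP.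
rewrite big1 ?mulr1; first by rewrite mulrC divfK.
by move=> k _; rewrite -mulr_suml fs divff.
Qed.

Lemma prodm_ge0 c f : 0 <= c -> (forall k s, 0 <= f k s) -> forall yy, 0 <= prodm c f yy.
Proof.
move=> c0 f0 yy; rewrite /prodm mulr_ge0 //; apply: prodr_ge0 => k _.
by rewrite divr_ge0.
Qed.

Lemma sum_marg (F : prodY Y -> R) (j : 'I_m) :
  \sum_yy F yy = \sum_(t : Y j) \sum_(yy : prodY Y | yy j == t) F yy.
Proof. by rewrite (partition_big (fun yy : prodY Y => yy j) predT). Qed.

Lemma prodm_sum c f : 0 <= c -> (forall k s, 0 <= f k s) ->
  (forall k, \sum_s f k s = c) -> \sum_yy prodm c f yy = c.
Proof.
move=> c0 f0 fs; pose j0 : 'I_m := Ordinal m0.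
rewrite (sum_marg _ j0) -[RHS](fs j0); apply: eq_bigr => t _; by apply: prodm_marg.
Qed.
End Cons.

Unset Implicit Arguments. Set Strict Implicit.



Definition i0 : 'I_2 := ord0.
Definition i1 : 'I_2 := ord_max.

Lemma I2 (th : 'I_2) : th = i0 \/ th = i1.
Proof. by case: th => -[|[|//]] h; [left|right]; apply/val_inj. Qed.

Lemma i01 : i0 != i1. Proof. by []. Qed.

Section Cons2.
Variable R : realType.
Variables (m : nat) (Y : 'I_m -> finType).
Hypothesis m0 : (0 < m)%N.
Variable P : forall j : 'I_m, 'I_2 -> Y j -> R.
Hypothesis hP : forall j, experiment (P j).
Variable w : 'I_2 -> R.
Hypothesis hw : forall th, 0 < w th.

Definition mu j y := Num.min (w i0 * P j i0 y) (w i1 * P j i1 y).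
Definition mj j := \sum_y mu j y.
Variable js : 'I_m.
Hypothesis hjs : forall j, mj js <= mj j.
Definition mm := mj js.
Definition mup j y := mm / mj j * mu j y.
Definition rho th j y := w th * P j th y - mup j y.
Definition Qs th (yy : prodY Y) :=
  (prodm mm mup yy + prodm (w th - mm) (rho th) yy) / w th.

Lemma P0 j th y : 0 <= P j th y. Proof. exact: (proj1 (hP j th)). Qed.
Lemma P1 j th : \sum_y P j th y = 1. Proof. exact: (proj2 (hP j th)). Qed.

Lemma mu_ge0 j y : 0 <= mu j y.
Proof.
by rewrite /mu le_min !mulr_ge0 ?P0 ?ltW ?hw.
Qed.

Lemma mu_le j y th : mu j y <= w th * P j th y.
Proof. by rewrite /mu; case: (I2 th) => ->; rewrite ge_min lexx ?orbT. Qed.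

Lemma mj_le j th : mj j <= w th.
Proof.
rewrite /mj -[leRHS]mulr1 -(P1 j th) mulr_sumr; apply: ler_sum => y _.
exact: mu_le.
Qed.

Lemma mj_ge0 j : 0 <= mj j.
Proof. by apply: sumr_ge0 => y _; apply: mu_ge0. Qed.

Lemma mm_ge0 : 0 <= mm. Proof. exact: mj_ge0. Qed.

Lemma ratio_ge0 j : 0 <= mm / mj j.
Proof. by rewrite divr_ge0 ?mm_ge0 ?mj_ge0. Qed.

Lemma ratio_le1 j : mm / mj j <= 1.
Proof.
have [e|n0] := eqVneq (mj j) 0; first by rewrite e invr0 mulr0.
have pos : 0 < mj j by rewrite lt_neqAle eq_sym n0 mj_ge0.
by rewrite ler_pdivrMr // mul1r hjs.
Qed.

Lemma mup_ge0 j y : 0 <= mup j y.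
Proof. by rewrite /mup mulr_ge0 ?ratio_ge0 ?mu_ge0. Qed.

Lemma mup_le j y : mup j y <= mu j y.
Proof.
by rewrite /mup -[leRHS]mul1r ler_wpM2r ?mu_ge0 ?ratio_le1.
Qed.

Lemma mup_sum j : \sum_y mup j y = mm.
Proof.
rewrite /mup -mulr_sumr -/(mj j).
have [e|n0] := eqVneq (mj j) 0.
  by rewrite e mulr0; apply/le_anti; rewrite mm_ge0 /= -e hjs.
by rewrite divfK.
Qed.

Lemma rho_ge0 th j y : 0 <= rho th j y.
Proof.
rewrite /rho subr_ge0; exact: le_trans (mup_le j y) (mu_le j y th).
Qed.

Lemma rho_sum th j : \sum_y rho th j y = w th - mm.
Proof.
by rewrite /rho sumrB mup_sum -mulr_sumr P1 mulr1.
Qed.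

Lemma wmm th : 0 <= w th - mm.
Proof. by rewrite subr_ge0; apply: mj_le. Qed.

Lemma prod1_marg j t :
  \sum_(yy : prodY Y | yy j == t) prodm mm mup yy = mup j t.
Proof.
apply: prodm_marg; [exact: mm_ge0 | exact: mup_ge0 | exact: mup_sum].
Qed.

Lemma prod2_marg th j t :
  \sum_(yy : prodY Y | yy j == t) prodm (w th - mm) (rho th) yy = rho th j t.
Proof.
apply: prodm_marg; [exact: wmm | exact: rho_ge0 | exact: rho_sum].
Qed.

Lemma Qs_marg th j t : \sum_(yy : prodY Y | yy j == t) Qs th yy = P j th t.
Proof.
rewrite /Qs -mulr_suml big_split /= prod1_marg prod2_marg /rho.
rewrite addrC subrK mulrC mulKf //; exact: lt0r_neq0 (hw th).
Qed.

Lemma Qs_ge0 th yy : 0 <= Qs th yy.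
Proof.
rewrite /Qs; apply: divr_ge0; last exact: ltW (hw th).
apply: addr_ge0; apply: prodm_ge0.
- exact: mm_ge0.
- exact: mup_ge0.
- exact: wmm.
- exact: rho_ge0.
Qed.

Lemma Qs_coupling : coupling P Qs.
Proof.
split; last exact: Qs_marg.
move=> th; split; first exact: Qs_ge0.
pose j0 : 'I_m := Ordinal m0.
rewrite (sum_marg _ j0) -(P1 j0 th); apply: eq_bigr => t _; exact: Qs_marg.
Qed.

Lemma prod2_sum th : \sum_yy prodm (w th - mm) (rho th) yy = w th - mm.
Proof.
apply: prodm_sum => //; [exact: wmm | exact: rho_ge0 | exact: rho_sum].
Qed.

Lemma key_bound a b : a != b ->
  \sum_yy Num.max 0 (w a * Qs a yy - w b * Qs b yy) <= w a - mm.
Proof.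
move=> ab; rewrite -(prod2_sum a); apply: ler_sum => yy _.
have wn th : w th != 0 by exact: lt0r_neq0 (hw th).
rewrite /Qs !(mulrC (w _)) !divfK // ge_max prodm_ge0 ?wmm //=; last exact: rho_ge0.
have h2 : 0 <= prodm (w b - mm) (rho b) yy.
  by apply: prodm_ge0; [exact: wmm | exact: rho_ge0].
lra.
Qed.

Lemma key_eq a b : a != b ->
  \sum_y Num.max 0 (w a * P js a y - w b * P js b y) = w a - mm.
Proof.
move=> ab.
have e y : Num.max 0 (w a * P js a y - w b * P js b y) = w a * P js a y - mu js y.
  have -> : mu js y = Num.min (w a * P js a y) (w b * P js b y).
    rewrite /mu; case: (I2 a) ab => ->; case: (I2 b) => -> //= _.
    by rewrite minC.
  set x := w a * P js a y; set z := w b * P js b y.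
  case: (leP x z) => h.
    by rewrite max_l ?subrr // subr_le0.
  by rewrite max_r // subr_ge0 ltW.
under eq_bigr do rewrite e.
by rewrite sumrB -mulr_sumr P1 mulr1.
Qed.

End Cons2.



Lemma exists_min (R : realType) (m : nat) (F : 'I_m -> R) : (0 < m)%N ->
  exists j, forall k, F j <= F k.
Proof.
move=> m0; pose j0 : 'I_m := Ordinal m0.
case: (@arg_minP _ _ _ j0 xpredT F isT) => j _ h; exists j => k; exact: h.
Qed.
Lemma exists_max (R : realType) (m : nat) (F : 'I_m -> R) : (0 < m)%N ->
  exists j, forall k, F k <= F j.
Proof.
move=> m0; pose j0 : 'I_m := Ordinal m0.
case: (@arg_maxP _ _ _ j0 xpredT F isT) => j _ h; exists j => k; exact: h.
Qed.

Lemma sum2 (R : realType) (F : 'I_2 -> R) : \sum_th F th = F i0 + F i1.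
Proof.
rewrite (bigD1 i0) //= (bigD1 i1) //= big_pred0 ?addr0 // => th.
by case: (I2 th) => ->.
Qed.

Section Main.
Variable R : realType.
Variables (A : finType) (u : 'I_2 -> A -> R) (a0 a1 : A).
Hypothesis a01 : a0 != a1.
Hypothesis aA : forall a, a = a0 \/ a = a1.
Variables (m : nat) (Y : 'I_m -> finType).
Hypothesis m0 : (0 < m)%N.
Variable P : forall j : 'I_m, 'I_2 -> Y j -> R.
Hypothesis hP : forall j, experiment (P j).

Let d := dd u a0 a1.

Lemma ggE (Z : finType) (E : 'I_2 -> Z -> R) y :
  gg u a0 a1 E y = d i0 * E i0 y + d i1 * E i1 y.
Proof. by rewrite /gg sum2. Qed.

Lemma same_pos (Z : finType) (E : 'I_2 -> Z -> R) :
  experiment E -> 0 <= d i0 -> 0 <= d i1 ->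
  \sum_y Num.max 0 (gg u a0 a1 E y) = d i0 + d i1.
Proof.
move=> hE h0 h1.
have e y : Num.max 0 (gg u a0 a1 E y) = d i0 * E i0 y + d i1 * E i1 y.
  rewrite ggE max_r //; apply: addr_ge0; apply: mulr_ge0 => //; exact: (proj1 (hE _)).
under eq_bigr do rewrite e.
by rewrite big_split /= -!mulr_sumr !(proj2 (hE _)) !mulr1.
Qed.

Lemma same_neg (Z : finType) (E : 'I_2 -> Z -> R) :
  experiment E -> d i0 <= 0 -> d i1 <= 0 ->
  \sum_y Num.max 0 (gg u a0 a1 E y) = 0.
Proof.
move=> hE h0 h1; apply: big1 => y _; rewrite ggE max_l //.
have a := proj1 (hE i0) y; have b := proj1 (hE i1) y.
have := mulr_le0_ge0 h0 a; have := mulr_le0_ge0 h1 b; lra.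
Qed.

Lemma construct : exists Q : 'I_2 -> prodY Y -> R,
  coupling P Q /\ exists j, WW u a0 a1 Q <= WW u a0 a1 (P j).
Proof.
pose w th := if d th == 0 then 1 else `|d th|.
have hw th : 0 < w th by rewrite /w; case: eqP => // /eqP; rewrite normr_gt0.
have [js hjs] := @exists_min R m (mj R m Y P w) m0.
pose Q := Qs R m Y P w js.
have hQ : coupling P Q by exact: (Qs_coupling R m Y m0 P hP w hw js hjs).
exists Q; split => //.
pose j0 : 'I_m := Ordinal m0.
rewrite /WW.
case: (lerP 0 (d i0)) => h0; case: (lerP 0 (d i1)) => h1.
- exists j0; rewrite lerD2l (same_pos _ _ hQ.1) // (same_pos _ _ (hP j0)) //.
- have [e0|n0] := eqVneq (d i0) 0.
    have h0' : d i0 <= 0 by rewrite e0.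
    exists j0; rewrite lerD2l (same_neg _ _ hQ.1 h0' (ltW h1)) (same_neg _ _ (hP j0) h0' (ltW h1)) //.
  have p0 : 0 < d i0 by rewrite lt_neqAle eq_sym n0.
  exists js; rewrite lerD2l.
  have w0 : w i0 = d i0 by rewrite /w (negbTE n0) ger0_norm.
  have w1 : w i1 = - d i1 by rewrite /w lt_eqF // ltr0_norm.
  have := key_eq R m Y P hP w js i0 i1 i01; have := key_bound R m Y m0 P hP w hw js hjs i0 i1 i01.
  rewrite w0 w1 -/(mm R m Y P w js) => hb he.
  rewrite -/d; under eq_bigr do rewrite ggE.
  under [X in _ <= X]eq_bigr do rewrite ggE.
  rewrite (eq_bigr (fun y => Num.max 0 (d i0 * P js i0 y - - d i1 * P js i1 y))); last first.
    by move=> y _; rewrite mulNr opprK.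
  rewrite he; apply: le_trans hb; apply: ler_sum => yy _.
  by rewrite mulNr opprK.
- have [e1|n1] := eqVneq (d i1) 0.
    have h1' : d i1 <= 0 by rewrite e1.
    exists j0; rewrite lerD2l (same_neg _ _ hQ.1 (ltW h0) h1') (same_neg _ _ (hP j0) (ltW h0) h1') //.
  have p1 : 0 < d i1 by rewrite lt_neqAle eq_sym n1.
  exists js; rewrite lerD2l.
  have w1 : w i1 = d i1 by rewrite /w (negbTE n1) ger0_norm.
  have w0 : w i0 = - d i0 by rewrite /w lt_eqF // ltr0_norm.
  have i10 : i1 != i0 by [].
  have := key_eq R m Y P hP w js i1 i0 i10; have := key_bound R m Y m0 P hP w hw js hjs i1 i0 i10.
  rewrite w0 w1 -/(mm R m Y P w js) => hb he.
  rewrite -/d; under eq_bigr do rewrite ggE.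
  under [X in _ <= X]eq_bigr do rewrite ggE.
  rewrite (eq_bigr (fun y => Num.max 0 (d i1 * P js i1 y - - d i0 * P js i0 y))); last first.
    by move=> y _; rewrite mulNr opprK addrC.
  rewrite he; apply: le_trans hb; apply: ler_sum => yy _.
  by rewrite mulNr opprK addrC.
- exists j0; rewrite lerD2l (same_neg _ _ hQ.1 (ltW h0) (ltW h1)) (same_neg _ _ (hP j0) (ltW h0) (ltW h1)) //.
Qed.

End Main.

Local Close Scope classical_set_scope.


Theorem theorem1 (R : realType) (A : finType) (u : 'I_2 -> A -> R)
  (m : nat) (Y : 'I_m -> finType) (P : forall j : 'I_m, 'I_2 -> Y j -> R)
  (Z : finType) (Pbar : 'I_2 -> Z -> R) :
  #|A| = 2%N -> (0 < m)%N ->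
  (forall j, experiment (P j)) -> experiment Pbar ->
  blackwell_sup Pbar P ->
  value_multi P u = value Pbar u /\
  ((forall j, value (P j) u <= value Pbar u) /\
   exists j, value (P j) u = value Pbar u).
Proof.
move=> hA m0 hP hPb hbs.
have [a0 [a1 [a01 hset]]] : exists a0 a1 : A, a0 != a1 /\ ([set: A] = [set a0; a1])%SET.
  by apply/cards2P; rewrite cardsT hA.
have aA a : a = a0 \/ a = a1.
  have : a \in [set: A]%SET := finset.in_setT a.
  by rewrite hset in_set2 => /orP [] /eqP; auto.
have hA0 : (0 < #|A|)%N by rewrite hA.
have [jm hjm] := @exists_max R m (fun j => WW u a0 a1 (P j)) m0.
set M := WW u a0 a1 (P jm).
have [Q [hQ [j1 hj1]]] := construct R A u a0 a1 m Y m0 P hP.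
have hVj j : value (P j) u = WW u a0 a1 (P j) := valueE u a01 aA (hP j).
have hWQ : WW u a0 a1 Q <= M := le_trans hj1 (hjm j1).
have hVQ : value Q u = WW u a0 a1 Q := valueE u a01 aA hQ.1.
have hPb_le : value Pbar u <= M.
  apply: le_trans (hbs.2 _ Q hQ.1 (fun j => coupling_more R _ m Y P Q j hQ) A u hA0) _.
  by rewrite hVQ.
have hge j : value (P j) u <= value Pbar u := hbs.1 j A u hA0.
have eqPb : value Pbar u = M.
  by apply/le_anti; rewrite hPb_le /= /M -hVj hge.
split; last first.
  by split => //; exists jm; rewrite hVj eqPb.
rewrite eqPb /value_multi; apply: sup_max.
  pose sl := fun yy : prodY Y => sstar u a0 a1 (P jm) (yy jm).
  exists sl; split; first by move=> yy; exact: sstar_strategy.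
  apply/esym/inf_min.
    exists Q; split => //.
    by rewrite /sl (payoff_lift R _ m Y P Q A u jm _ hQ) (sstar_payoff u a01 aA (hP jm)).
  move=> w [Q' [hQ' ->]].
  by rewrite /sl (payoff_lift R _ m Y P Q' A u jm _ hQ') (sstar_payoff u a01 aA (hP jm)).
move=> v [s [hs ->]].
pose B := \sum_th \sum_a `|u th a|.
have hlb : has_lbound [set w | exists Q0 : 'I_2 -> prodY Y -> R,
                   coupling P Q0 /\ w = payoff Q0 u s].
  exists (- B) => w [Q0 [hQ0 ->]].
  have := payoff_bound u hQ0.1 hs; rewrite ler_norml => /andP [] //.
apply: le_trans (ge_inf hlb _) _; first by exists Q.
apply: le_trans hWQ; rewrite -hVQ; exact: value_ge hQ.1 hs.
Qed.
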